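(* Let $d\ge 2$, let $\mu$ be a partition of $p$ with at most $d$ rows, let $\alpha_1,\ldots,\alpha_k$ be all the distinct partitions of $p-1$ obtained from $\mu$ by removing a single box, and let $B^{\mu\mu}$ be the $k\times k$ matrix with entries $b_{ij}=\frac{m_\mu}{d(d^2-1)}\Big(d\frac{m_\mu}{m_{\alpha_i}}\delta_{ij}-1\Big)$. Then $\det B^{\mu\mu}=0$ if and only if $d\,m_\mu=m_{\alpha_1}+m_{\alpha_2}+\cdots+m_{\alpha_k}$.
   Context: For a partition (Young diagram) $\lambda$ with at most $d$ rows, $m_\lambda$ denotes the number of semistandard Young tableaux of shape $\lambda$ with entries in $\{1,\ldots,d\}$ (equivalently, the multiplicity of the corresponding symmetric-group irrep in $(\mathbb{C}^d)^{\otimes|\lambda|}$). *)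

(* Defs.v *)
From mathcomp Require Import all_boot all_order all_algebra.
Set Implicit Arguments. Unset Strict Implicit. Unset Printing Implicit Defensive.

Definition is_partition (lam : seq nat) : bool :=
  sorted geq lam && all (fun x => 0 < x) lam.

(* cell (i,j), 0-indexed: row i, column j *)
Definition is_cell (lam : seq nat) (i j : nat) : bool :=
  (i < size lam) && (j < nth 0 lam i).

(* A filling of the bounding box size lam x head 0 lam with values in {0..d};
   0 is used as "empty" outside the diagram. *)
Definition filling (lam : seq nat) (d : nat) :=
  {ffun 'I_(size lam) * 'I_(head 0 lam) -> 'I_d.+1}.

Definition fval (lam : seq nat) (d : nat) (f : filling lam d) (i j : nat) : nat :=
  match @insub _ (fun k => k < size lam) 'I_(size lam) i,
        @insub _ (fun k => k < head 0 lam) 'I_(head 0 lam) j with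
  | Some i', Some j' => nat_of_ord (f (i', j'))
  | _, _ => 0
  end.

Definition is_ssyt (lam : seq nat) (d : nat) (f : filling lam d) : bool :=
  [forall ij : 'I_(size lam) * 'I_(head 0 lam),
     let i := nat_of_ord ij.1 in let j := nat_of_ord ij.2 in
     if is_cell lam i j then
       [&& 0 < fval f i j,
           is_cell lam i j.+1 ==> (fval f i j <= fval f i j.+1) &
           is_cell lam i.+1 j ==> (fval f i j < fval f i.+1 j)]
     else fval f i j == 0].

Definition mult (d : nat) (lam : seq nat) : nat :=
  #|[set f : filling lam d | is_ssyt f]|.

Definition rem_box (mu : seq nat) (i : nat) : seq nat :=
  [seq x <- set_nth 0 mu i (nth 0 mu i).-1 | x != 0].

Definition removal_of (mu alpha : seq nat) : Prop :=
  is_partition alpha /\ exists2 i, i < size mu & alpha = rem_box mu i.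

(* Main.v *)
Require Import Defs.
From mathcomp Require Import all_boot all_order all_algebra.
From mathcomp Require Import ring.
Import GRing.Theory Num.Theory.

Lemma nth_le_head (s : seq nat) i : sorted geq s -> nth 0 s i <= head 0 s.
Proof.
move=> ss; case: (ltnP i (size s)) => hi; last by rewrite nth_default.
case: s ss hi => [|x s] //= ss hi.
have := @sorted_leq_nth _ geq (fun _ _ _ h1 h2 => leq_trans h2 h1) (fun x => leqnn x) 0 (x :: s) ss 0 i.
by rewrite !inE /= => /(_ isT hi (leq0n i)).
Qed.

Lemma fvalE lam d (f : filling lam d) i j (hi : i < size lam) (hj : j < head 0 lam) :
  fval f i j = nat_of_ord (f (Ordinal hi, Ordinal hj)).
Proof. by rewrite /fval !insubT. Qed.

Lemma fval0 lam d (f : filling lam d) i j :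
  ~~ ((i < size lam) && (j < head 0 lam)) -> fval f i j = 0.
Proof.
rewrite /fval; case: (boolP (i < size lam)) => hi.
  move=> /= hj; rewrite (@insubF _ (fun k => k < head 0 lam) 'I_(head 0 lam) j (negbTE hj)).
  by case: insub.
by move=> _; rewrite (@insubF _ (fun k => k < size lam) 'I_(size lam) i (negbTE hi)).
Qed.

Lemma mult_pos d lam : is_partition lam -> size lam <= d -> 0 < mult d lam.
Proof.
move=> /andP [ss _] hs.
pose f : filling lam d := [ffun ij : (ordinal (size lam) * ordinal (head 0 lam))%type => if is_cell lam ij.1 ij.2 then inord (ij.1.+1) else ord0].
have fv : forall i j, fval f i j = if is_cell lam i j then i.+1 else 0.
  move=> i j.
  case: (boolP (i < size lam)) => hi; last first.
    by rewrite fval0 ?(negbTE hi) // /is_cell (negbTE hi).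
  case: (boolP (j < head 0 lam)) => hj.
    rewrite (@fvalE _ _ f _ _ hi hj) ffunE /=; case: ifP => // _; rewrite inordK //.
    by rewrite ltnS; exact: leq_trans hi hs.
  rewrite fval0 ?hi ?(negbTE hj) // /is_cell hi /=; case: ltnP => // hl; case/negP: hj.
  exact: leq_trans hl (@nth_le_head lam i ss).
rewrite /mult card_gt0; apply/set0Pn; exists f; rewrite inE.
apply/forallP => ij /=.
rewrite !fv.
case: (is_cell lam ij.1 ij.2) => //=.
by case: ifP => _ /=; case: ifP => _ /=; rewrite ?ltnSn ?leqnSn ?andbT.
Qed.
Local Open Scope ring_scope.
Lemma det1_uv (R : comRingType) k (u : 'cV[R]_k) (v : 'rV[R]_k) :
  \det (1%:M - u *m v) = 1 - (v *m u) 0 0.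
Proof.
have e1 : block_mx (1%:M : 'M[R]_1) v u 1%:M
  = block_mx 1%:M 0 u 1%:M *m block_mx 1%:M v 0 (1%:M - u *m v).
  by rewrite mulmx_block ?mul1mx ?mulmx1 ?mulmx0 ?mul0mx ?addr0 ?add0r addrC subrK.
have e2 : block_mx (1%:M : 'M[R]_1) v u 1%:M
  = block_mx 1%:M v 0 1%:M *m block_mx (1%:M - v *m u) 0 u 1%:M.
  by rewrite mulmx_block ?mul1mx ?mulmx1 ?mul0mx ?mulmx0 ?addr0 ?add0r subrK.
have := congr1 determinant e1; rewrite e2 !det_mulmx det_lblock det_ublock.
rewrite det_lblock det_ublock !det1 !mul1r mulr1 det_mx11 !mxE eqxx mulr1n => <-.
by [].
Qed.

Lemma detDJ (R : fieldType) k (x : 'I_k -> R) : (forall i, x i != 0) ->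
  \det (diag_mx (\row_i x i) - const_mx 1) = (\prod_i x i) * (1 - \sum_i (x i)^-1).
Proof.
move=> nz.
set u : 'cV[R]_k := \col_i (x i)^-1.
set v : 'rV[R]_k := const_mx 1.
have du : diag_mx (\row_i x i) *m u = const_mx 1.
  by apply/matrixP => i j; rewrite mul_diag_mx !mxE divff.
have -> : diag_mx (\row_i x i) - const_mx 1 = diag_mx (\row_i x i) *m (1%:M - u *m v).
  rewrite mulmxBr mulmx1 mulmxA du; congr (_ - _).
  by apply/matrixP => i j; rewrite !mxE big_ord1 !mxE mulr1.
rewrite det_mulmx det_diag det1_uv; congr (_ * _).
  by apply: eq_bigr => i _; rewrite mxE.
rewrite !mxE; congr (_ - _); apply: eq_bigr => i _; by rewrite !mxE mul1r.
Qed.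
Local Close Scope ring_scope.

Theorem corollary30 (d p : nat) (mu : seq nat) (alphas : seq (seq nat)) :
  2 <= d ->
  is_partition mu -> sumn mu = p -> size mu <= d ->
  uniq alphas ->
  (forall a, a \in alphas <-> removal_of mu a) ->
  let k := size alphas in
  let B : 'M[rat]_k :=
    (\matrix_(i < k, j < k)
      (((mult d mu)%:R / (d%:R * (d%:R ^+ 2 - 1))) *
       (d%:R * ((mult d mu)%:R / (mult d (nth [::] alphas i))%:R) * (i == j)%:R - 1)))%R
  in
  (\det B = 0)%R <-> d * mult d mu = \sum_(a <- alphas) mult d a.
Proof.
move=> d2 pmu _ smu _ hal k B.
have mpos : 0 < mult d mu := mult_pos d mu pmu smu.
have apos : forall i : 'I_k, 0 < mult d (nth [::] alphas i).
  move=> i; have /hal [pa [j hj ea]] : nth [::] alphas i \in alphas by apply: mem_nth.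
  rewrite ea in pa *; apply: mult_pos => //.
  rewrite /rem_box size_filter; apply: leq_trans (count_size _ _) _.
  by rewrite size_set_nth (maxn_idPr hj).
set m := mult d mu in mpos B *.
set c : rat := (m%:R / (d%:R * (d%:R ^+ 2 - 1)))%R.
set x : 'I_k -> rat := fun i => (d%:R * (m%:R / (mult d (nth [::] alphas i))%:R))%R.
have eB : B = (c *: (diag_mx (\row_i x i) - const_mx 1))%R.
  apply/matrixP => i j; rewrite !mxE; case: eqP => [->|ne] /=.
    by rewrite mulr1.
  by rewrite mulr0 mulr0n.
rewrite eB detZ.
have dnz : (d%:R : rat) != 0%R by rewrite pnatr_eq0 -lt0n (ltn_trans _ d2).
have mnz : (m%:R : rat) != 0%R by rewrite pnatr_eq0 -lt0n.
have anz : forall i : 'I_k, ((mult d (nth [::] alphas i))%:R : rat) != 0%R.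
  by move=> i; rewrite pnatr_eq0 -lt0n.
have xnz : forall i, x i != 0%R.
  by move=> i; rewrite /x mulf_neq0 // mulf_neq0 // invr_neq0.
have d21 : ((d%:R : rat) ^+ 2 - 1 != 0)%R.
  rewrite subr_eq0 -natrX pnatr_eq1 expnS expn1 muln_eq1.
  by case: (d) d2 => [|[|n]].
have cnz : c != 0%R by rewrite /c mulf_neq0 // invr_neq0 // mulf_neq0.
have pnz : (\prod_i x i != 0)%R by apply/prodf_neq0 => i _.
have hs : (\sum_i (x i)^-1 = (\sum_(a <- alphas) mult d a)%:R / (d * m)%:R)%R.
  rewrite (big_nth [::]) big_mkord natr_sum mulr_suml; apply: eq_bigr => i _.
  rewrite /x natrM; field; rewrite ?mnz ?dnz ?anz //.
have dmnz : ((d * m)%:R : rat) != 0%R by rewrite natrM mulf_neq0.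
rewrite detDJ // hs; split.
  move/eqP; rewrite !mulf_eq0 expf_eq0 (negbTE cnz) andbF /= (negbTE pnz) /=.
  rewrite subr_eq0 eq_sym => /eqP h.
  have := congr1 (fun t => (t * (d * m)%:R)%R) h; rewrite /= mul1r divfK //.
  by move/eqP; rewrite eqr_nat => /eqP.
by move=> <-; rewrite divff // subrr !mulr0.
Qed.
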